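(* In the setting below, let $z_0$ be a singular point of $P$ with $k_1\neq0$, $\phi(z_0)=0$ and $\hat R_{\theta_1'\theta_1'}(z_0)\neq0$. Put $\ell_1=\hat R_{\theta_1'r_2'}(z_0)/\hat R_{\theta_1'\theta_1'}(z_0)$, $\ell_2=\hat R_{\theta_1'\theta_2'}(z_0)/\hat R_{\theta_1'\theta_1'}(z_0)$, and new coordinates $(r_1'',\theta_1'',r_2'',\theta_2'')=(r_1',\theta_1'+\ell_1r_2'+\ell_2\theta_2',r_2',\theta_2')$. Then the Hessian of $\hat R$ with respect to $(\theta_1'',r_2'',\theta_2'')$ at $z_0$ is the diagonal matrix $$\operatorname{diag}\Big(\hat R_{\theta_1'\theta_1'}(z_0),\ -\frac{4(p-1)^2|\mu|^2}{k_1^2\hat R_{\theta_1'\theta_1'}(z_0)},\ 0\Big),\quad\text{where }\hat R_{\theta_1'\theta_1'}(z_0)=\frac{4(p-1)|\mu|^3|u_0|\sin\Theta_1\cos\Theta_2}{k_1^2}.$$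
   Context: Fix integers $p,q\ge2$ and $\mu\in\mathbb{C}\setminus\{0\}$. Let $P(u,v;\mu)=\mu(u^p+\bar u)+v^q+\bar v$, regarded as a smooth map $\mathbb{R}^4\to\mathbb{R}^2$, with $Q=\operatorname{Re}P$, $R=\operatorname{Im}P$. A singular point is a point where the real differential of $P$ has rank $<2$; every singular point $z_0=(u_0,v_0)$ satisfies $u_0v_0\ne0$. Use polar coordinates $r_1=|u|,\theta_1=\arg u,r_2=|v|,\theta_2=\arg v$ near $z_0$. Fix real representatives $\arg u_0,\arg v_0,\arg\mu$ and an integer $\kappa$ with $\frac{p-1}{2}\arg u_0+\arg\mu=\frac{q-1}{2}\arg v_0+\kappa\pi$. Set $\Theta_1=\frac{p+1}{2}\arg u_0$, $\Theta_2=\frac{p-1}{2}\arg u_0+\arg\mu$, $\Theta_3=\frac{q+1}{2}\arg v_0$, $(k_1,k_2,k_3,k_4)=(\partial_{r_1}Q,\partial_{\theta_1}Q,\partial_{r_2}Q,\partial_{\theta_2}Q)(z_0)$, and $\phi(z_0)=(-1)^\kappa(p-1)|v_0|\sin\Theta_3+(q-1)|\mu||u_0|\sin\Theta_1$. When $k_1\ne0$, define coordinates $(r_1',\theta_1',r_2',\theta_2')=(k_1r_1+k_2\theta_1+k_3r_2+k_4\theta_2,\theta_1,r_2,\theta_2)$ near $z_0$, $s=\frac{\partial R}{\partial r_1'}(z_0)$ and $\hat R=R-sQ$; subscripts on $\hat R$ denote partial derivatives in the indicated coordinate system. *)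

(* Defs.v *)
From Stdlib Require Import Reals Lra ZArith.
Open Scope R_scope.

Definition cplx := (R * R)%type.
Definition Cadd (z w : cplx) : cplx := (fst z + fst w, snd z + snd w).
Definition Cmul (z w : cplx) : cplx :=
  (fst z * fst w - snd z * snd w, fst z * snd w + snd z * fst w).
Definition Cconj (z : cplx) : cplx := (fst z, - snd z).
Fixpoint Cpow (z : cplx) (n : nat) : cplx :=
  match n with O => (1, 0) | S k => Cmul z (Cpow z k) end.
Definition Cabs (z : cplx) : R := sqrt (fst z ^ 2 + snd z ^ 2).

Definition Pfun (p q : nat) (mu u v : cplx) : cplx :=
  Cadd (Cmul mu (Cadd (Cpow u p) (Cconj u))) (Cadd (Cpow v q) (Cconj v)).

(* Real functions on R^4 = C^2 (coordinates Re u, Im u, Re v, Im v). *)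
Definition Rfun4 := R -> R -> R -> R -> R.
Definition Qre (p q : nat) (mu : cplx) : Rfun4 :=
  fun x1 y1 x2 y2 => fst (Pfun p q mu (x1, y1) (x2, y2)).
Definition Rim (p q : nat) (mu : cplx) : Rfun4 :=
  fun x1 y1 x2 y2 => snd (Pfun p q mu (x1, y1) (x2, y2)).

Definition pd (i : nat) (f : Rfun4) (a b c d l : R) : Prop :=
  match i with
  | 1%nat => derivable_pt_lim (fun t => f t b c d) a l
  | 2%nat => derivable_pt_lim (fun t => f a t c d) b l
  | 3%nat => derivable_pt_lim (fun t => f a b t d) c l
  | 4%nat => derivable_pt_lim (fun t => f a b c t) d l
  | _ => False
  end.

Definition pd2 (i j : nat) (f : Rfun4) (a b c d l : R) : Prop :=
  exists g : Rfun4,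
    (forall a' b' c' d', pd j f a' b' c' d' (g a' b' c' d')) /\
    pd i g a b c d l.

(* z0 = (x1 + i y1, x2 + i y2) is a singular point of P: the real
   differential (2x4 Jacobian of (Q,R)) has rank < 2, i.e. its two rows
   are linearly dependent. *)
Definition singular_point (p q : nat) (mu : cplx) (x1 y1 x2 y2 : R) : Prop :=
  exists a b : R, (a <> 0 \/ b <> 0) /\
    forall i : nat, (1 <= i <= 4)%nat ->
      exists lq lr : R,
        pd i (Qre p q mu) x1 y1 x2 y2 lq /\
        pd i (Rim p q mu) x1 y1 x2 y2 lr /\
        a * lq + b * lr = 0.

Definition polar (f : Rfun4) : Rfun4 :=
  fun r1 t1 r2 t2 => f (r1 * cos t1) (r1 * sin t1) (r2 * cos t2) (r2 * sin t2).

(* Main.v *)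
From Pilot Require Import Defs.
From Stdlib Require Import Reals ZArith Lra Lia FunctionalExtensionality.
From Coquelicot Require Import Coquelicot.
Import Pilot.Defs.
Open Scope R_scope.


Record coef := mkc {cA:R; cB:R; cC:R; cD:R}.
Definition Uf (c:coef) (n:nat) r t :=
  cA c*(r^n*cos(INR n*t)) + cB c*(r^n*sin(INR n*t)) + cC c*(r*cos t) + cD c*(r*sin t).
Definition Ur (c:coef) (n:nat) r t :=
  cA c*(INR n*r^(pred n)*cos(INR n*t)) + cB c*(INR n*r^(pred n)*sin(INR n*t)) + cC c*cos t + cD c*sin t.
Definition Ut (c:coef) (n:nat) r t :=
  cA c*(r^n*(-(INR n*sin(INR n*t)))) + cB c*(r^n*(INR n*cos(INR n*t))) + cC c*(r*(-sin t)) + cD c*(r*cos t).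
Definition Urr (c:coef) (n:nat) r t :=
  cA c*(INR n*(INR (pred n)*r^(pred (pred n)))*cos(INR n*t)) + cB c*(INR n*(INR (pred n)*r^(pred (pred n)))*sin(INR n*t)).
Definition Urt (c:coef) (n:nat) r t :=
  cA c*(INR n*r^(pred n)*(-(INR n*sin(INR n*t)))) + cB c*(INR n*r^(pred n)*(INR n*cos(INR n*t))) + cC c*(-sin t) + cD c*cos t.
Definition Utt (c:coef) (n:nat) r t :=
  cA c*(r^n*(-(INR n*(INR n*cos(INR n*t))))) + cB c*(r^n*(-(INR n*(INR n*sin(INR n*t)))))
  + cC c*(r*(-cos t)) + cD c*(r*(-sin t)).

Lemma Dconv f x l l' : derivable_pt_lim f x l -> l = l' -> derivable_pt_lim f x l'.
Proof. intros H ->; exact H. Qed.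

Lemma Dext f g x l : (forall t, f t = g t) -> derivable_pt_lim g x l -> derivable_pt_lim f x l.
Proof. intros H; replace f with g; auto. apply functional_extensionality; intros; auto. Qed.

Lemma Upath c n (f g : R -> R) a v b w x :
  (forall t, f t = a + t*v) -> (forall t, g t = b + t*w) ->
  derivable_pt_lim (fun t => Uf c n (f t) (g t)) x (v*Ur c n (f x) (g x) + w*Ut c n (f x) (g x)).
Proof.
  intros Hf Hg. rewrite Hf, Hg.
  apply (Dext _ (fun t => Uf c n (a+t*v) (b+t*w))). { intros; now rewrite Hf, Hg. }
  apply is_derive_Reals. unfold Uf, Ur, Ut. auto_derive; auto. ring.
Qed.

Lemma URpath c n (f g : R -> R) a v b w x :
  (forall t, f t = a + t*v) -> (forall t, g t = b + t*w) ->
  derivable_pt_lim (fun t => Ur c n (f t) (g t)) x (v*Urr c n (f x) (g x) + w*Urt c n (f x) (g x)).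
Proof.
  intros Hf Hg. rewrite Hf, Hg.
  apply (Dext _ (fun t => Ur c n (a+t*v) (b+t*w))). { intros; now rewrite Hf, Hg. }
  apply is_derive_Reals. unfold Ur, Urr, Urt. auto_derive; auto. ring.
Qed.

Lemma UTpath c n (f g : R -> R) a v b w x :
  (forall t, f t = a + t*v) -> (forall t, g t = b + t*w) ->
  derivable_pt_lim (fun t => Ut c n (f t) (g t)) x (v*Urt c n (f x) (g x) + w*Utt c n (f x) (g x)).
Proof.
  intros Hf Hg. rewrite Hf, Hg.
  apply (Dext _ (fun t => Ut c n (a+t*v) (b+t*w))). { intros; now rewrite Hf, Hg. }
  apply is_derive_Reals. unfold Ut, Urt, Utt. auto_derive; auto. ring.
Qed.


Definition aff (c0 c1 c2 c3 c4 x1 x2 x3 x4 : R) := c0 + c1*x1 + c2*x2 + c3*x3 + c4*x4.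
Definition dir (a1 a2 a3 a4 : R) (j:nat) : R :=
  match j with 1%nat => a1 | 2%nat => a2 | 3%nat => a3 | 4%nat => a4 | _ => 0 end.

Section FF.
Variables (cu cv : coef) (p q : nat) (a0 a1 a2 a3 a4 b0 b1 b2 b3 b4 : R).
Definition LA := aff a0 a1 a2 a3 a4.
Definition LB := aff b0 b1 b2 b3 b4.
Definition FF : Rfun4 := fun x1 x2 x3 x4 =>
  Uf cu p (LA x1 x2 x3 x4) (LB x1 x2 x3 x4) + Uf cv q x3 x4.
Definition GG (j:nat) : Rfun4 := fun x1 x2 x3 x4 =>
  dir a1 a2 a3 a4 j * Ur cu p (LA x1 x2 x3 x4) (LB x1 x2 x3 x4)
  + dir b1 b2 b3 b4 j * Ut cu p (LA x1 x2 x3 x4) (LB x1 x2 x3 x4)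
  + dir 0 0 1 0 j * Ur cv q x3 x4 + dir 0 0 0 1 j * Ut cv q x3 x4.
Definition HH (i j:nat) : Rfun4 := fun x1 x2 x3 x4 =>
  let u := LA x1 x2 x3 x4 in let v := LB x1 x2 x3 x4 in
  dir a1 a2 a3 a4 j * (dir a1 a2 a3 a4 i * Urr cu p u v + dir b1 b2 b3 b4 i * Urt cu p u v)
  + dir b1 b2 b3 b4 j * (dir a1 a2 a3 a4 i * Urt cu p u v + dir b1 b2 b3 b4 i * Utt cu p u v)
  + dir 0 0 1 0 j * (dir 0 0 1 0 i * Urr cv q x3 x4 + dir 0 0 0 1 i * Urt cv q x3 x4)
  + dir 0 0 0 1 j * (dir 0 0 1 0 i * Urt cv q x3 x4 + dir 0 0 0 1 i * Utt cv q x3 x4).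

Ltac pdcase :=
  eapply Dconv; [ apply derivable_pt_lim_plus;
    [ (apply Upath with (a:=_) (b:=_) || idtac) | apply Upath with (a:=_) (b:=_) ] | ].

Lemma FF_pd j x1 x2 x3 x4 : (1 <= j <= 4)%nat -> pd j FF x1 x2 x3 x4 (GG j x1 x2 x3 x4).
Proof.
  intros Hj. unfold GG, FF, LA, LB.
  destruct j as [|[|[|[|[|j]]]]]; try (exfalso; lia); simpl pd; simpl dir.
  - eapply Dconv; [apply derivable_pt_lim_plus;
      [apply Upath with (a:=aff a0 0 a2 a3 a4 0 x2 x3 x4) (v:=a1) (b:=aff b0 0 b2 b3 b4 0 x2 x3 x4) (w:=b1)
      |apply Upath with (a:=x3) (v:=0) (b:=x4) (w:=0)] | ];
      try (intros; cbv beta; unfold aff; ring). all: try ring.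
  - eapply Dconv; [apply derivable_pt_lim_plus;
      [apply Upath with (a:=aff a0 a1 0 a3 a4 x1 0 x3 x4) (v:=a2) (b:=aff b0 b1 0 b3 b4 x1 0 x3 x4) (w:=b2)
      |apply Upath with (a:=x3) (v:=0) (b:=x4) (w:=0)] | ];
      try (intros; cbv beta; unfold aff; ring). all: try ring.
  - eapply Dconv; [apply derivable_pt_lim_plus;
      [apply Upath with (a:=aff a0 a1 a2 0 a4 x1 x2 0 x4) (v:=a3) (b:=aff b0 b1 b2 0 b4 x1 x2 0 x4) (w:=b3)
      |apply Upath with (f:=fun t => t) (a:=0) (v:=1) (b:=x4) (w:=0)] | ];
      try (intros; cbv beta; unfold aff; ring). all: try ring.
  - eapply Dconv; [apply derivable_pt_lim_plus;
      [apply Upath with (a:=aff a0 a1 a2 a3 0 x1 x2 x3 0) (v:=a4) (b:=aff b0 b1 b2 b3 0 x1 x2 x3 0) (w:=b4)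
      |apply Upath with (g:=fun t => t) (a:=x3) (v:=0) (b:=0) (w:=1)] | ];
      try (intros; cbv beta; unfold aff; ring). all: try ring.
Qed.
End FF.

Lemma Dplus f g x l1 l2 : derivable_pt_lim f x l1 -> derivable_pt_lim g x l2 ->
  derivable_pt_lim (fun t => f t + g t) x (l1 + l2).
Proof. intros; apply derivable_pt_lim_plus; auto. Qed.
Lemma Dscal (a:R) f x l : derivable_pt_lim f x l -> derivable_pt_lim (fun t => a * f t) x (a * l).
Proof. intros H. apply (derivable_pt_lim_scal f a x l H). Qed.

Section FF2.
Variables (cu cv : coef) (p q : nat) (a0 a1 a2 a3 a4 b0 b1 b2 b3 b4 : R).
Lemma FF_pd2 i j x1 x2 x3 x4 : (1 <= i <= 4)%nat -> (1 <= j <= 4)%nat ->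
  pd2 i j (FF cu cv p q a0 a1 a2 a3 a4 b0 b1 b2 b3 b4) x1 x2 x3 x4
    (HH cu cv p q a0 a1 a2 a3 a4 b0 b1 b2 b3 b4 i j x1 x2 x3 x4).
Proof.
  intros Hi Hj. exists (GG cu cv p q a0 a1 a2 a3 a4 b0 b1 b2 b3 b4 j). split.
  { intros; apply FF_pd; auto. }
  unfold GG, HH, LA, LB.
  set (dj1 := dir a1 a2 a3 a4 j). set (dj2 := dir b1 b2 b3 b4 j).
  set (dj3 := dir 0 0 1 0 j). set (dj4 := dir 0 0 0 1 j).
  destruct i as [|[|[|[|[|i]]]]]; try (exfalso; lia); simpl pd; simpl dir.
  - eapply Dconv; [ repeat apply Dplus; apply Dscal;
      [apply URpath with (a:=aff a0 0 a2 a3 a4 0 x2 x3 x4) (v:=a1) (b:=aff b0 0 b2 b3 b4 0 x2 x3 x4) (w:=b1)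
      |apply UTpath with (a:=aff a0 0 a2 a3 a4 0 x2 x3 x4) (v:=a1) (b:=aff b0 0 b2 b3 b4 0 x2 x3 x4) (w:=b1)
      |apply URpath with (a:=x3) (v:=0) (b:=x4) (w:=0)
      |apply UTpath with (a:=x3) (v:=0) (b:=x4) (w:=0)] | ];
      try (intros; cbv beta; unfold aff; ring). all: try ring.
  - eapply Dconv; [ repeat apply Dplus; apply Dscal;
      [apply URpath with (a:=aff a0 a1 0 a3 a4 x1 0 x3 x4) (v:=a2) (b:=aff b0 b1 0 b3 b4 x1 0 x3 x4) (w:=b2)
      |apply UTpath with (a:=aff a0 a1 0 a3 a4 x1 0 x3 x4) (v:=a2) (b:=aff b0 b1 0 b3 b4 x1 0 x3 x4) (w:=b2)
      |apply URpath with (a:=x3) (v:=0) (b:=x4) (w:=0)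
      |apply UTpath with (a:=x3) (v:=0) (b:=x4) (w:=0)] | ];
      try (intros; cbv beta; unfold aff; ring). all: try ring.
  - eapply Dconv; [ repeat apply Dplus; apply Dscal;
      [apply URpath with (a:=aff a0 a1 a2 0 a4 x1 x2 0 x4) (v:=a3) (b:=aff b0 b1 b2 0 b4 x1 x2 0 x4) (w:=b3)
      |apply UTpath with (a:=aff a0 a1 a2 0 a4 x1 x2 0 x4) (v:=a3) (b:=aff b0 b1 b2 0 b4 x1 x2 0 x4) (w:=b3)
      |apply URpath with (f:=fun t=>t) (a:=0) (v:=1) (b:=x4) (w:=0)
      |apply UTpath with (f:=fun t=>t) (a:=0) (v:=1) (b:=x4) (w:=0)] | ];
      try (intros; cbv beta; unfold aff; ring). all: try ring.
  - eapply Dconv; [ repeat apply Dplus; apply Dscal;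
      [apply URpath with (a:=aff a0 a1 a2 a3 0 x1 x2 x3 0) (v:=a4) (b:=aff b0 b1 b2 b3 0 x1 x2 x3 0) (w:=b4)
      |apply UTpath with (a:=aff a0 a1 a2 a3 0 x1 x2 x3 0) (v:=a4) (b:=aff b0 b1 b2 b3 0 x1 x2 x3 0) (w:=b4)
      |apply URpath with (g:=fun t=>t) (a:=x3) (v:=0) (b:=0) (w:=1)
      |apply UTpath with (g:=fun t=>t) (a:=x3) (v:=0) (b:=0) (w:=1)] | ];
      try (intros; cbv beta; unfold aff; ring). all: try ring.
Qed.
End FF2.

Lemma GG_eval cu cv p q a0 a1 a2 a3 a4 b0 b1 b2 b3 b4 j x1 x2 x3 x4 u v :
  LA a0 a1 a2 a3 a4 x1 x2 x3 x4 = u -> LB b0 b1 b2 b3 b4 x1 x2 x3 x4 = v ->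
  GG cu cv p q a0 a1 a2 a3 a4 b0 b1 b2 b3 b4 j x1 x2 x3 x4 =
  dir a1 a2 a3 a4 j * Ur cu p u v + dir b1 b2 b3 b4 j * Ut cu p u v
  + dir 0 0 1 0 j * Ur cv q x3 x4 + dir 0 0 0 1 j * Ut cv q x3 x4.
Proof. intros <- <-. reflexivity. Qed.

Lemma HH_eval cu cv p q a0 a1 a2 a3 a4 b0 b1 b2 b3 b4 i j x1 x2 x3 x4 u v :
  LA a0 a1 a2 a3 a4 x1 x2 x3 x4 = u -> LB b0 b1 b2 b3 b4 x1 x2 x3 x4 = v ->
  HH cu cv p q a0 a1 a2 a3 a4 b0 b1 b2 b3 b4 i j x1 x2 x3 x4 =
  dir a1 a2 a3 a4 j * (dir a1 a2 a3 a4 i * Urr cu p u v + dir b1 b2 b3 b4 i * Urt cu p u v)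
  + dir b1 b2 b3 b4 j * (dir a1 a2 a3 a4 i * Urt cu p u v + dir b1 b2 b3 b4 i * Utt cu p u v)
  + dir 0 0 1 0 j * (dir 0 0 1 0 i * Urr cv q x3 x4 + dir 0 0 0 1 i * Urt cv q x3 x4)
  + dir 0 0 0 1 j * (dir 0 0 1 0 i * Urt cv q x3 x4 + dir 0 0 0 1 i * Utt cv q x3 x4).
Proof. intros <- <-. reflexivity. Qed.

Lemma Uf_eq c n r r' t t' : r = r' -> t = t' -> Uf c n r t = Uf c n r' t'.
Proof. intros -> ->; reflexivity. Qed.


Lemma Cpow_polar r t n : Cpow (r*cos t, r*sin t) n = (r^n * cos(INR n*t), r^n*sin(INR n*t)).
Proof.
  induction n as [|n IH].
  - apply injective_projections; simpl; rewrite ?Rmult_0_l, ?cos_0, ?sin_0; ring.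
  - simpl Cpow. rewrite IH. unfold Cmul; simpl fst; simpl snd.
    rewrite S_INR. replace ((INR n + 1) * t) with (t + INR n * t) by ring.
    rewrite cos_plus, sin_plus. simpl pow. apply injective_projections; simpl; ring.
Qed.

Definition cuQ (mu:cplx) := mkc (fst mu) (- snd mu) (fst mu) (snd mu).
Definition cvQ := mkc 1 0 1 0.
Definition cuR (mu:cplx) := mkc (snd mu) (fst mu) (snd mu) (- fst mu).
Definition cvR := mkc 0 1 0 (-1).

Lemma polarQ p q mu r1 t1 r2 t2 :
  polar (Qre p q mu) r1 t1 r2 t2 = Uf (cuQ mu) p r1 t1 + Uf cvQ q r2 t2.
Proof.
  unfold polar, Qre, Pfun. rewrite !Cpow_polar. destruct mu as [mr mi].
  unfold Uf, cuQ, cvQ, Cadd, Cmul, Cconj; simpl. ring.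
Qed.
Lemma polarR p q mu r1 t1 r2 t2 :
  polar (Rim p q mu) r1 t1 r2 t2 = Uf (cuR mu) p r1 t1 + Uf cvR q r2 t2.
Proof.
  unfold polar, Rim, Pfun. rewrite !Cpow_polar. destruct mu as [mr mi].
  unfold Uf, cuR, cvR, Cadd, Cmul, Cconj; simpl. ring.
Qed.

Definition clin (c d : coef) (s : R) := mkc (cA c - s*cA d) (cB c - s*cB d) (cC c - s*cC d) (cD c - s*cD d).
Lemma Uf_lin c d s n r t : Uf c n r t - s * Uf d n r t = Uf (clin c d s) n r t.
Proof. unfold Uf, clin; simpl; ring. Qed.

Lemma pd_unique i f a b c d l1 l2 : pd i f a b c d l1 -> pd i f a b c d l2 -> l1 = l2.
Proof.
  destruct i as [|[|[|[|[|i]]]]]; simpl; try tauto; apply uniqueness_limite.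
Qed.

Lemma pd_ext i f g a b c d l : (forall x1 x2 x3 x4, f x1 x2 x3 x4 = g x1 x2 x3 x4) ->
  pd i g a b c d l -> pd i f a b c d l.
Proof.
  intros H. replace f with g; auto.
  do 4 (apply functional_extensionality; intro). now rewrite H.
Qed.

Lemma pd2_unique i j f a b c d l1 l2 : pd2 i j f a b c d l1 -> pd2 i j f a b c d l2 -> l1 = l2.
Proof.
  intros [g1 [H1 K1]] [g2 [H2 K2]].
  assert (g1 = g2).
  { do 4 (apply functional_extensionality; intro). eapply pd_unique; eauto. }
  subst. eapply pd_unique; eauto.
Qed.

Lemma pd2_ext i j f g a b c d l : (forall x1 x2 x3 x4, f x1 x2 x3 x4 = g x1 x2 x3 x4) ->
  pd2 i j g a b c d l -> pd2 i j f a b c d l.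
Proof.
  intros H. replace f with g; auto.
  do 4 (apply functional_extensionality; intro). now rewrite H.
Qed.

Lemma pd2_conv i j f a b c d l l' : pd2 i j f a b c d l -> l = l' -> pd2 i j f a b c d l'.
Proof. intros H ->; exact H. Qed.

Lemma shift_nat x n : cos (x + INR n * PI) = (-1)^n * cos x /\ sin (x + INR n * PI) = (-1)^n * sin x.
Proof.
  induction n as [|n [IH1 IH2]].
  - simpl. rewrite Rmult_0_l, Rplus_0_r. split; ring.
  - rewrite S_INR. replace (x + (INR n + 1) * PI) with ((x + INR n * PI) + PI) by ring.
    rewrite neg_cos, neg_sin, IH1, IH2. simpl. split; ring.
Qed.

Lemma pm1_sq n : (-1)^n * (-1)^n = 1.
Proof. rewrite <- pow_add. replace (n+n)%nat with (2*n)%nat by lia. rewrite pow_1_even. auto. Qed.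

Lemma shift_Z x k : cos (x + IZR k * PI) = powerRZ (-1) k * cos x /\ sin (x + IZR k * PI) = powerRZ (-1) k * sin x.
Proof.
  destruct k as [|n|n].
  - simpl. rewrite Rmult_0_l, Rplus_0_r. split; ring.
  - replace (IZR (Z.pos n)) with (INR (Pos.to_nat n)) by (rewrite INR_IZR_INZ, positive_nat_Z; auto).
    simpl powerRZ. apply shift_nat.
  - replace (IZR (Z.neg n)) with (- INR (Pos.to_nat n)) by (rewrite INR_IZR_INZ, positive_nat_Z; auto).
    simpl powerRZ.
    destruct (shift_nat (x - INR (Pos.to_nat n) * PI) (Pos.to_nat n)) as [H1 H2].
    replace (x - INR (Pos.to_nat n) * PI + INR (Pos.to_nat n) * PI) with x in H1, H2 by ring.
    pose proof (pm1_sq (Pos.to_nat n)) as Hs.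
    assert (Hi : / (-1) ^ Pos.to_nat n = (-1) ^ Pos.to_nat n).
    { apply (Rmult_eq_reg_l ((-1) ^ Pos.to_nat n)). rewrite Rinv_r; [lra|].
      intro Z; rewrite Z in Hs; lra. intro Z; rewrite Z in Hs; lra. }
    rewrite Hi. replace (x + - INR (Pos.to_nat n) * PI) with (x - INR (Pos.to_nat n) * PI) by ring.
    split; [rewrite H1 | rewrite H2]; rewrite <- Rmult_assoc, Hs; ring.
Qed.

Lemma powerRZ_m1_sq k : powerRZ (-1) k * powerRZ (-1) k = 1.
Proof.
  destruct k as [|n|n]; simpl.
  - ring.
  - apply pm1_sq.
  - rewrite <- Rinv_mult, pm1_sq. apply Rinv_1.
Qed.


Lemma Dminus f g x l1 l2 : derivable_pt_lim f x l1 -> derivable_pt_lim g x l2 ->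
  derivable_pt_lim (fun t => f t - g t) x (l1 - l2).
Proof. intros; apply derivable_pt_lim_minus; auto. Qed.
Lemma Dconst (c x : R) : derivable_pt_lim (fun _ => c) x 0.
Proof. apply derivable_pt_lim_const. Qed.
Lemma Did (x : R) : derivable_pt_lim (fun t => t) x 1.
Proof. apply derivable_pt_lim_id. Qed.

Lemma Cpow_dx n y x :
  derivable_pt_lim (fun t => fst (Cpow (t,y) (S n))) x (INR (S n) * fst (Cpow (x,y) n)) /\
  derivable_pt_lim (fun t => snd (Cpow (t,y) (S n))) x (INR (S n) * snd (Cpow (x,y) n)).
Proof.
  induction n as [|n [IH1 IH2]].
  - simpl Cpow. unfold Cmul; simpl. split.
    + apply (Dext _ (fun t => t)). { intros; ring. } eapply Dconv; [apply Did|ring].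
    + apply (Dext _ (fun t => y)). { intros; ring. } eapply Dconv; [apply Dconst|ring].
  - split.
    + apply (Dext _ (fun t => t * fst (Cpow (t,y) (S n)) - y * snd (Cpow (t,y) (S n)))).
      { intros; reflexivity. }
      eapply Dconv. { apply Dminus; [apply derivable_pt_lim_mult; [apply Did|apply IH1] | apply Dscal, IH2]. }
      change (Cpow (x,y) (S n)) with (Cmul (x,y) (Cpow (x,y) n)). unfold Cmul; simpl fst; simpl snd.
      rewrite !S_INR. ring.
    + apply (Dext _ (fun t => t * snd (Cpow (t,y) (S n)) + y * fst (Cpow (t,y) (S n)))).
      { intros; reflexivity. }
      eapply Dconv. { apply Dplus; [apply derivable_pt_lim_mult; [apply Did|apply IH2] | apply Dscal, IH1]. }
      change (Cpow (x,y) (S n)) with (Cmul (x,y) (Cpow (x,y) n)). unfold Cmul; simpl fst; simpl snd.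
      rewrite !S_INR. ring.
Qed.

Lemma Cpow_dy n x y :
  derivable_pt_lim (fun t => fst (Cpow (x,t) (S n))) y (- INR (S n) * snd (Cpow (x,y) n)) /\
  derivable_pt_lim (fun t => snd (Cpow (x,t) (S n))) y (INR (S n) * fst (Cpow (x,y) n)).
Proof.
  induction n as [|n [IH1 IH2]].
  - simpl Cpow. unfold Cmul; simpl. split.
    + apply (Dext _ (fun t => x*1 - t * 0)). { intros; ring. }
      eapply Dconv; [apply Dminus; [apply Dconst| apply derivable_pt_lim_mult; [apply Did|apply Dconst]]|simpl; ring].
    + apply (Dext _ (fun t => t)). { intros; ring. } eapply Dconv; [apply Did|simpl; ring].
  - split.
    + apply (Dext _ (fun t => x * fst (Cpow (x,t) (S n)) - t * snd (Cpow (x,t) (S n)))).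
      { intros; reflexivity. }
      eapply Dconv. { apply Dminus; [apply Dscal, IH1 | apply derivable_pt_lim_mult; [apply Did|apply IH2]]. }
      change (Cpow (x,y) (S n)) with (Cmul (x,y) (Cpow (x,y) n)). unfold Cmul; simpl fst; simpl snd.
      rewrite !S_INR. ring.
    + apply (Dext _ (fun t => x * snd (Cpow (x,t) (S n)) + t * fst (Cpow (x,t) (S n)))).
      { intros; reflexivity. }
      eapply Dconv. { apply Dplus; [apply Dscal, IH2 | apply derivable_pt_lim_mult; [apply Did|apply IH1]]. }
      change (Cpow (x,y) (S n)) with (Cmul (x,y) (Cpow (x,y) n)). unfold Cmul; simpl fst; simpl snd.
      rewrite !S_INR. ring.
Qed.

Definition n2 (z:cplx) := fst z ^ 2 + snd z ^ 2.
Lemma n2_Cpow z n : n2 (Cpow z n) = n2 z ^ n.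
Proof.
  induction n as [|n IH]; simpl Cpow.
  - unfold n2; simpl; ring.
  - simpl pow. rewrite <- IH. unfold n2, Cmul; simpl; ring.
Qed.

Lemma sing_mod (p q : nat) (mu : cplx) x1 y1 x2 y2 :
  (1 <= p)%nat -> (1 <= q)%nat -> mu <> (0,0) ->
  singular_point p q mu x1 y1 x2 y2 ->
  (INR p)^2 * (x1^2+y1^2)^(pred p) = 1 /\ (INR q)^2 * (x2^2+y2^2)^(pred q) = 1.
Proof.
  intros Hp Hq Hmu [a [b [Hab H]]].
  destruct p as [|p]; [lia|]. destruct q as [|q]; [lia|]. simpl pred.
  destruct mu as [mr mi].
  assert (Hab2 : a^2 + b^2 <> 0).
  { destruct Hab as [Ha|Hb]; [pose proof (pow2_gt_0 a Ha) | pose proof (pow2_gt_0 b Hb)]; nra. }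
  assert (Hm2 : mr^2 + mi^2 <> 0).
  { intro Z. apply Hmu. assert (mr = 0) by nra. assert (mi = 0) by nra. subst; auto. }
  destruct (Cpow_dx p y1 x1) as [Fx Gx]. destruct (Cpow_dy p x1 y1) as [Fy Gy].
  destruct (Cpow_dx q y2 x2) as [Fx2 Gx2]. destruct (Cpow_dy q x2 y2) as [Fy2 Gy2].
  set (U1 := INR (S p) * fst (Cpow (x1,y1) p)) in *.
  set (U2 := INR (S p) * snd (Cpow (x1,y1) p)) in *.
  set (V1 := INR (S q) * fst (Cpow (x2,y2) q)) in *.
  set (V2 := INR (S q) * snd (Cpow (x2,y2) q)) in *.
  assert (EU : U1^2 + U2^2 = INR (S p) ^2 * (x1^2+y1^2)^p).
  { unfold U1, U2. rewrite <- (n2_Cpow (x1,y1)). unfold n2; simpl; ring. }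
  assert (EV : V1^2 + V2^2 = INR (S q) ^2 * (x2^2+y2^2)^q).
  { unfold V1, V2. rewrite <- (n2_Cpow (x2,y2)). unfold n2; simpl; ring. }
  rewrite <- EU, <- EV.
  destruct (H 1%nat ltac:(lia)) as [q1 [r1 [P1 [R1 E1]]]].
  destruct (H 2%nat ltac:(lia)) as [q2 [r2 [P2 [R2 E2]]]].
  destruct (H 3%nat ltac:(lia)) as [q3 [r3 [P3 [R3 E3]]]].
  destruct (H 4%nat ltac:(lia)) as [q4 [r4 [P4 [R4 E4]]]].
  simpl pd in *. unfold Qre, Rim, Pfun, Cadd, Cmul, Cconj in P1, R1, P2, R2, P3, R3, P4, R4.
  simpl fst in *; simpl snd in *.
  assert (Q1 : q1 = mr * (U1 + 1) - mi * U2).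
  { eapply uniqueness_limite; [exact P1|].
    apply (Dext _ (fun t => mr * (fst (Cpow (t,y1) (S p)) + t) - mi * (snd (Cpow (t,y1) (S p)) + - y1)
       + (fst (Cpow (x2,y2) (S q)) + x2))). { intros; simpl; ring. }
    eapply Dconv. { apply Dplus; [apply Dminus; apply Dscal; [apply Dplus; [apply Fx|apply Did]|apply Dplus; [apply Gx|apply Dconst]] | apply Dconst]. }
    unfold U1, U2; ring. }
  assert (Q2 : r1 = mr * U2 + mi * (U1 + 1)).
  { eapply uniqueness_limite; [exact R1|].
    apply (Dext _ (fun t => mr * (snd (Cpow (t,y1) (S p)) + - y1) + mi * (fst (Cpow (t,y1) (S p)) + t)
       + (snd (Cpow (x2,y2) (S q)) + - y2))). { intros; simpl; ring. }
    eapply Dconv. { apply Dplus; [apply Dplus; apply Dscal; [apply Dplus; [apply Gx|apply Dconst]|apply Dplus; [apply Fx|apply Did]] | apply Dconst]. }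
    unfold U1, U2; ring. }
  assert (Q3 : q2 = - mr * U2 - mi * (U1 - 1)).
  { eapply uniqueness_limite; [exact P2|].
    apply (Dext _ (fun t => mr * (fst (Cpow (x1,t) (S p)) + x1) - mi * (snd (Cpow (x1,t) (S p)) + - t)
       + (fst (Cpow (x2,y2) (S q)) + x2))). { intros; simpl; ring. }
    eapply Dconv. { apply Dplus; [apply Dminus; apply Dscal; [apply Dplus; [apply Fy|apply Dconst]|apply Dplus; [apply Gy|apply derivable_pt_lim_opp, Did]] | apply Dconst]. }
    unfold U1, U2; ring. }
  assert (Q4 : r2 = mr * (U1 - 1) - mi * U2).
  { eapply uniqueness_limite; [exact R2|].
    apply (Dext _ (fun t => mr * (snd (Cpow (x1,t) (S p)) + - t) + mi * (fst (Cpow (x1,t) (S p)) + x1)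
       + (snd (Cpow (x2,y2) (S q)) + - y2))). { intros; simpl; ring. }
    eapply Dconv. { apply Dplus; [apply Dplus; apply Dscal; [apply Dplus; [apply Gy|apply derivable_pt_lim_opp, Did]|apply Dplus; [apply Fy|apply Dconst]] | apply Dconst]. }
    unfold U1, U2; ring. }
  assert (Q5 : q3 = V1 + 1).
  { eapply uniqueness_limite; [exact P3|].
    apply (Dext _ (fun t => (mr * (fst (Cpow (x1,y1) (S p)) + x1) - mi * (snd (Cpow (x1,y1) (S p)) + - y1))
       + (fst (Cpow (t,y2) (S q)) + t))). { intros; simpl; ring. }
    eapply Dconv. { apply Dplus; [apply Dconst | apply Dplus; [apply Fx2 | apply Did]]. }
    unfold V1; ring. }
  assert (Q6 : r3 = V2).
  { eapply uniqueness_limite; [exact R3|].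
    apply (Dext _ (fun t => (mr * (snd (Cpow (x1,y1) (S p)) + - y1) + mi * (fst (Cpow (x1,y1) (S p)) + x1))
       + (snd (Cpow (t,y2) (S q)) + - y2))). { intros; simpl; ring. }
    eapply Dconv. { apply Dplus; [apply Dconst | apply Dplus; [apply Gx2 | apply Dconst]]. }
    unfold V2; ring. }
  assert (Q7 : q4 = - V2).
  { eapply uniqueness_limite; [exact P4|].
    apply (Dext _ (fun t => (mr * (fst (Cpow (x1,y1) (S p)) + x1) - mi * (snd (Cpow (x1,y1) (S p)) + - y1))
       + (fst (Cpow (x2,t) (S q)) + x2))). { intros; simpl; ring. }
    eapply Dconv. { apply Dplus; [apply Dconst | apply Dplus; [apply Fy2 | apply Dconst]]. }
    unfold V2; ring. }
  assert (Q8 : r4 = V1 - 1).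
  { eapply uniqueness_limite; [exact R4|].
    apply (Dext _ (fun t => (mr * (snd (Cpow (x1,y1) (S p)) + - y1) + mi * (fst (Cpow (x1,y1) (S p)) + x1))
       + (snd (Cpow (x2,t) (S q)) + - t))). { intros; simpl; ring. }
    eapply Dconv. { apply Dplus; [apply Dconst | apply Dplus; [apply Gy2 | apply derivable_pt_lim_opp, Did]]. }
    unfold V1; ring. }
  subst q1 r1 q2 r2 q3 r3 q4 r4.
  split.
  - assert (K : (a^2+b^2)*(mr^2+mi^2)*(U1^2+U2^2-1) = 0).
    { assert (C : (a^2+b^2)*(mr^2+mi^2)*(U1^2+U2^2-1) =
        ((a*mr+b*mi)*(U1-1) - (a*mi-b*mr)*U2) * (a * (mr * (U1 + 1) - mi * U2) + b * (mr * U2 + mi * (U1 + 1)))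
        - ((a*mr+b*mi)*U2 + (a*mi-b*mr)*(U1+1)) * (a * (- mr * U2 - mi * (U1 - 1)) + b * (mr * (U1 - 1) - mi * U2))) by ring.
      rewrite C, E1, E2. ring. }
    apply Rmult_integral in K as [K|K]; [apply Rmult_integral in K as [K|K]; contradiction|lra].
  - assert (K : (a^2+b^2)*(V1^2+V2^2-1) = 0).
    { assert (C : (a^2+b^2)*(V1^2+V2^2-1) =
        (a*(V1-1) + b*V2) * (a * (V1 + 1) + b * V2)
        - (a*V2 - b*(V1+1)) * (a * (- V2) + b * (V1 - 1))) by ring.
      rewrite C, E3, E4. ring. }
    apply Rmult_integral in K as [K|K]; [contradiction|lra].
Qed.


Lemma uclosed1 (mr mi m c1 s1 c2 s2 : R) (n : nat) (r t : R) :
  mr*cos(INR n*t) - mi*sin(INR n*t) = m*(c1*c2 - s1*s2) ->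
  mi*cos(INR n*t) + mr*sin(INR n*t) = m*(s1*c2 + c1*s2) ->
  mr*cos t + mi*sin t = m*(c1*c2 + s1*s2) ->
  mi*cos t - mr*sin t = m*(s2*c1 - c2*s1) ->
  INR n * r^(pred n) = 1 -> r^n = r * r^(pred n) ->
  Ur (mkc mr (-mi) mr mi) n r t = 2*m*c1*c2 /\
  Ut (mkc mr (-mi) mr mi) n r t = -2*m*r*s1*c2 /\
  Ur (mkc mi mr mi (-mr)) n r t = 2*m*c1*s2.
Proof.
  intros T1 T2 T3 T4 X1 X2.
  set (w := r^(pred n)) in *.
  set (N := INR n) in *. set (CP := cos (N*t)) in *. set (SP := sin (N*t)) in *.
  set (C := cos t) in *. set (S := sin t) in *.
  set (E1 := mr*CP - mi*SP) in *. set (E2 := mi*CP + mr*SP) in *.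
  set (E3 := mr*C + mi*S) in *. set (E4 := mi*C - mr*S) in *.
  split; [|split].
  - transitivity ((N*w)*E1 + E3). { unfold Ur; simpl; fold N w CP SP C S; unfold E1, E3; ring. }
    rewrite X1, T1, T3; ring.
  - transitivity (-r*(N*w)*E2 + r*E4). { unfold Ut; simpl; fold N w CP SP C S; rewrite X2; unfold E2, E4; ring. }
    rewrite X1, T2, T4; ring.
  - transitivity ((N*w)*E2 + E4). { unfold Ur; simpl; fold N w CP SP C S; unfold E2, E4; ring. }
    rewrite X1, T2, T4; ring.
Qed.

Lemma uclosed2 (mr mi m c1 s1 c2 s2 s : R) (n : nat) (r t : R) :
  mr*cos(INR n*t) - mi*sin(INR n*t) = m*(c1*c2 - s1*s2) ->
  mi*cos(INR n*t) + mr*sin(INR n*t) = m*(s1*c2 + c1*s2) ->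
  mr*cos t + mi*sin t = m*(c1*c2 + s1*s2) ->
  mi*cos t - mr*sin t = m*(s2*c1 - c2*s1) ->
  INR n * r^(pred n) = 1 -> r^n = r * r^(pred n) -> r^(pred n) = r * r^(pred (pred n)) ->
  INR (pred n) = INR n - 1 ->
  s*c2 = s2 -> c2^2 + s2^2 = 1 ->
  r*c2*Urr (clin (mkc mi mr mi (-mr)) (mkc mr (-mi) mr mi) s) n r t = m*(INR n - 1)*s1 /\
  c2*Urt (clin (mkc mi mr mi (-mr)) (mkc mr (-mi) mr mi) s) n r t = m*(INR n - 1)*c1 /\
  c2*Utt (clin (mkc mi mr mi (-mr)) (mkc mr (-mi) mr mi) s) n r t = -m*r*(INR n - 1)*s1.
Proof.
  intros T1 T2 T3 T4 X1 X2 X3 X4 Hs Hc.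
  set (w := r^(pred n)) in *. set (w2 := r^(pred (pred n))) in *.
  set (N := INR n) in *. set (CP := cos (N*t)) in *. set (SP := sin (N*t)) in *.
  set (C := cos t) in *. set (S := sin t) in *.
  set (E1 := mr*CP - mi*SP) in *. set (E2 := mi*CP + mr*SP) in *.
  set (E3 := mr*C + mi*S) in *. set (E4 := mi*C - mr*S) in *.
  split; [|split].
  - transitivity ((N*w)*(N-1)*(c2*E2 - (s*c2)*E1)).
    { unfold Urr, clin; simpl; fold N w w2 CP SP C S. rewrite X4, X3. unfold E1, E2; fold N; ring. }
    rewrite X1, T1, T2, Hs. replace (m*(N-1)*s1) with (m*(N-1)*s1*(c2^2+s2^2)) by (rewrite Hc; ring). ring.
  - transitivity (N*(N*w)*(c2*E1 + (s*c2)*E2) - (c2*E3 + (s*c2)*E4)).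
    { unfold Urt, clin; simpl; fold N w CP SP C S. unfold E1, E2, E3, E4; ring. }
    rewrite X1, T1, T2, T3, T4, Hs. replace (m*(N-1)*c1) with (m*(N-1)*c1*(c2^2+s2^2)) by (rewrite Hc; ring). ring.
  - transitivity (-r*N*(N*w)*(c2*E2 - (s*c2)*E1) - r*(c2*E4 - (s*c2)*E3)).
    { unfold Utt, clin; simpl; fold N w CP SP C S. rewrite X2. unfold E1, E2, E3, E4; ring. }
    rewrite X1, T1, T2, T3, T4, Hs. replace (-m*r*(N-1)*s1) with (-m*r*(N-1)*s1*(c2^2+s2^2)) by (rewrite Hc; ring). ring.
Qed.


Lemma final_alg (m R1 R2 P Qn c1 s1 c2 s2 c3 s3 e k1 k2 k3 k4 Urr Urt Utt Vrr Vrt Vtt h11 h12 h13 l1 l2 : R) :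
  k1 = 2*m*c1*c2 -> k2 = -2*m*R1*s1*c2 -> k3 = 2*e*c3*c2 -> k4 = -2*e*R2*s3*c2 ->
  R1*c2*Urr = m*(P-1)*s1 -> c2*Urt = m*(P-1)*c1 -> c2*Utt = -m*R1*(P-1)*s1 ->
  R2*c2*Vrr = e*(Qn-1)*s3 -> c2*Vrt = e*(Qn-1)*c3 -> c2*Vtt = -e*R2*(Qn-1)*s3 ->
  c1^2+s1^2 = 1 -> c3^2+s3^2 = 1 -> e*e = 1 ->
  e*(P-1)*R2*s3 + (Qn-1)*m*R1*s1 = 0 ->
  k1 <> 0 -> R1 <> 0 -> R2 <> 0 -> h11 <> 0 ->
  h11 = (-k2/k1)*((-k2/k1)*Urr + Urt) + ((-k2/k1)*Urt + Utt) ->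
  h12 = (-k3/k1)*((-k2/k1)*Urr + Urt) ->
  h13 = (-k4/k1)*((-k2/k1)*Urr + Urt) ->
  l1 = h12/h11 -> l2 = h13/h11 ->
  h11 = 4*(P-1)*m^3*R1*s1*c2/k1^2 /\
  (forall i j : nat, (2 <= i <= 4)%nat -> (2 <= j <= 4)%nat ->
    dir (1/k1) (-k2/k1) ((k2*l1-k3)/k1) ((k2*l2-k4)/k1) j *
      (dir (1/k1) (-k2/k1) ((k2*l1-k3)/k1) ((k2*l2-k4)/k1) i * Urr + dir 0 1 (-l1) (-l2) i * Urt)
    + dir 0 1 (-l1) (-l2) j *
      (dir (1/k1) (-k2/k1) ((k2*l1-k3)/k1) ((k2*l2-k4)/k1) i * Urt + dir 0 1 (-l1) (-l2) i * Utt)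
    + dir 0 0 1 0 j * (dir 0 0 1 0 i * Vrr + dir 0 0 0 1 i * Vrt)
    + dir 0 0 0 1 j * (dir 0 0 1 0 i * Vrt + dir 0 0 0 1 i * Vtt)
    = if Nat.eqb i j then
        match i with
        | 2%nat => h11
        | 3%nat => - (4 * (P - 1) ^ 2 * m ^ 2) / (k1 ^ 2 * h11)
        | _ => 0
        end else 0).
Proof.
  intros K1 K2 K3 K4 HUrr HUrt HUtt HVrr HVrt HVtt C1 C3 E2 PHI Hk1 HR1 HR2 Hh11 H11 H12 H13 L1 L2.
  assert (Hm : m <> 0) by (intro Z; apply Hk1; rewrite K1, Z; ring).
  assert (Hc1 : c1 <> 0) by (intro Z; apply Hk1; rewrite K1, Z; ring).
  assert (Hc2 : c2 <> 0) by (intro Z; apply Hk1; rewrite K1, Z; ring).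
  assert (Urr_ : Urr = m*(P-1)*s1/(R1*c2)) by (rewrite <- HUrr; field; repeat split; auto).
  assert (Urt_ : Urt = m*(P-1)*c1/c2) by (rewrite <- HUrt; field; repeat split; auto).
  assert (Utt_ : Utt = -m*R1*(P-1)*s1/c2) by (rewrite <- HUtt; field; repeat split; auto).
  assert (Vrr_ : Vrr = e*(Qn-1)*s3/(R2*c2)) by (rewrite <- HVrr; field; repeat split; auto).
  assert (Vrt_ : Vrt = e*(Qn-1)*c3/c2) by (rewrite <- HVrt; field; repeat split; auto).
  assert (Vtt_ : Vtt = -e*R2*(Qn-1)*s3/c2) by (rewrite <- HVtt; field; repeat split; auto).
  assert (A2 : -k2/k1 = R1*s1/c1) by (rewrite K1, K2; field; repeat split; auto).
  rewrite A2 in H11, H12, H13 |- *.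
  assert (Z : R1*s1/c1*Urt + Utt = 0) by (rewrite Urt_, Utt_; field; repeat split; auto).
  assert (G : R1*s1/c1*Urr + Urt = m*(P-1)/(c1*c2)).
  { rewrite Urr_, Urt_. replace (m*(P-1)/(c1*c2)) with (m*(P-1)*(c1^2+s1^2)/(c1*c2)) by (rewrite C1, Rmult_1_r; reflexivity).
    field; repeat split; auto. }
  rewrite Z, Rplus_0_r, G in H11. rewrite G in H12, H13.
  assert (Hs1 : s1 <> 0) by (intro W; apply Hh11; rewrite H11, W; field; repeat split; auto).
  assert (HP : P - 1 <> 0) by (intro W; apply Hh11; rewrite H11, W; field; repeat split; auto).
  assert (L1_ : l1 = - e*c3/(m*R1*s1)) by (rewrite L1, H11, H12, K1, K3; field; repeat split; auto).
  assert (L2_ : l2 = e*R2*s3/(m*R1*s1)) by (rewrite L2, H11, H13, K1, K4; field; repeat split; auto).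
  assert (A3 : (k2*l1 - k3)/k1 = 0) by (rewrite L1_, K1, K2, K3; field; repeat split; auto).
  assert (A4 : (k2*l2 - k4)/k1 = 0) by (rewrite L2_, K1, K2, K4; field; repeat split; auto).
  rewrite A3, A4.
  split.
  { rewrite H11, K1. field; repeat split; auto. }
  assert (QQ0 : (Qn-1)*(m*R1*s1) = -e*(P-1)*R2*s3).
  { replace ((Qn-1)*(m*R1*s1)) with ((Qn-1)*m*R1*s1) by ring. lra. }
  assert (QQ : Qn - 1 = - e*(P-1)*R2*s3/(m*R1*s1)).
  { rewrite <- QQ0. field; repeat split; auto. }
  intros i j Hi Hj.
  destruct i as [|[|[|[|[|i]]]]]; try (exfalso; lia);
  destruct j as [|[|[|[|[|j]]]]]; try (exfalso; lia); simpl dir; simpl Nat.eqb; cbv iota.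
  Ltac fin L1_ L2_ Urr_ Urt_ Utt_ Vrr_ Vrt_ Vtt_ QQ H11 K1 :=
    rewrite ?L1_, ?L2_, ?Urr_, ?Urt_, ?Utt_, ?Vrr_, ?Vrt_, ?Vtt_; rewrite ?QQ; rewrite ?H11, ?K1.
  - transitivity (h11 * (c1^2+s1^2)); [|rewrite C1, Rmult_1_r; reflexivity].
    fin L1_ L2_ Urr_ Urt_ Utt_ Vrr_ Vrt_ Vtt_ QQ H11 K1. field; repeat split; auto.
  - fin L1_ L2_ Urr_ Urt_ Utt_ Vrr_ Vrt_ Vtt_ QQ H11 K1. field; repeat split; auto.
  - fin L1_ L2_ Urr_ Urt_ Utt_ Vrr_ Vrt_ Vtt_ QQ H11 K1. field; repeat split; auto.
  - fin L1_ L2_ Urr_ Urt_ Utt_ Vrr_ Vrt_ Vtt_ QQ H11 K1. field; repeat split; auto.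
  - transitivity (-(4*(P-1)^2*m^2)/(k1^2*h11) * ((e*e)*(c3^2+s3^2))); [|rewrite E2, C3, !Rmult_1_r; reflexivity].
    fin L1_ L2_ Urr_ Urt_ Utt_ Vrr_ Vrt_ Vtt_ QQ H11 K1. field; repeat split; auto.
  - fin L1_ L2_ Urr_ Urt_ Utt_ Vrr_ Vrt_ Vtt_ QQ H11 K1. field; repeat split; auto.
  - fin L1_ L2_ Urr_ Urt_ Utt_ Vrr_ Vrt_ Vtt_ QQ H11 K1. field; repeat split; auto.
  - fin L1_ L2_ Urr_ Urt_ Utt_ Vrr_ Vrt_ Vtt_ QQ H11 K1. field; repeat split; auto.
  - fin L1_ L2_ Urr_ Urt_ Utt_ Vrr_ Vrt_ Vtt_ QQ H11 K1. field; repeat split; auto.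
Qed.


Theorem lemma3p11
  (p q : nat) (hp : (2 <= p)%nat) (hq : (2 <= q)%nat)
  (mu : cplx) (hmu : mu <> (0, 0))
  (u0 v0 : cplx)
  (hsing : singular_point p q mu (fst u0) (snd u0) (fst v0) (snd v0))
  (* real representatives of the arguments *)
  (argu argv argmu : R)
  (hargu : u0 = (Cabs u0 * cos argu, Cabs u0 * sin argu))
  (hargv : v0 = (Cabs v0 * cos argv, Cabs v0 * sin argv))
  (hargmu : mu = (Cabs mu * cos argmu, Cabs mu * sin argmu))
  (kappa : Z)
  (hkappa : (INR p - 1) / 2 * argu + argmu = (INR q - 1) / 2 * argv + IZR kappa * PI)
  (* phi(z0) = 0 *)
  (hphi : powerRZ (-1) kappa * (INR p - 1) * Cabs v0 * sin ((INR q + 1) / 2 * argv)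
          + (INR q - 1) * Cabs mu * Cabs u0 * sin ((INR p + 1) / 2 * argu) = 0)
  (* k_i = partial derivatives of Q in polar coordinates at z0 *)
  (k1 k2 k3 k4 : R)
  (hk1 : pd 1 (polar (Qre p q mu)) (Cabs u0) argu (Cabs v0) argv k1)
  (hk2 : pd 2 (polar (Qre p q mu)) (Cabs u0) argu (Cabs v0) argv k2)
  (hk3 : pd 3 (polar (Qre p q mu)) (Cabs u0) argu (Cabs v0) argv k3)
  (hk4 : pd 4 (polar (Qre p q mu)) (Cabs u0) argu (Cabs v0) argv k4)
  (hk1nz : k1 <> 0)
  (* primed coordinates: r1' = k1 r1 + k2 th1 + k3 r2 + k4 th2, others unchanged;
     a function f(r1,th1,r2,th2) expressed in primed coordinates: *)
  (toPrimed : Rfun4 -> Rfun4)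
  (htoPrimed : forall f r1' t1' r2' t2',
     toPrimed f r1' t1' r2' t2' = f ((r1' - k2 * t1' - k3 * r2' - k4 * t2') / k1) t1' r2' t2')
  (r1'0 : R) (hr1'0 : r1'0 = k1 * Cabs u0 + k2 * argu + k3 * Cabs v0 + k4 * argv)
  (* s = dR/dr1' (z0) *)
  (s : R)
  (hs : pd 1 (toPrimed (polar (Rim p q mu))) r1'0 argu (Cabs v0) argv s)
  (* hat R = R - s Q *)
  (Rhat : Rfun4)
  (hRhat : forall r1 t1 r2 t2,
     Rhat r1 t1 r2 t2 = polar (Rim p q mu) r1 t1 r2 t2 - s * polar (Qre p q mu) r1 t1 r2 t2)
  (* second partials of hat R in primed coordinates at z0 *)
  (h11 h12 h13 : R)
  (hh11 : pd2 2 2 (toPrimed Rhat) r1'0 argu (Cabs v0) argv h11)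
  (hh12 : pd2 2 3 (toPrimed Rhat) r1'0 argu (Cabs v0) argv h12)
  (hh13 : pd2 2 4 (toPrimed Rhat) r1'0 argu (Cabs v0) argv h13)
  (hh11nz : h11 <> 0)
  (l1 l2 : R) (hl1 : l1 = h12 / h11) (hl2 : l2 = h13 / h11)
  (* double-primed coordinates: th1'' = th1' + l1 r2' + l2 th2', others unchanged *)
  (Rhat'' : Rfun4)
  (hRhat'' : forall r1'' t1'' r2'' t2'',
     Rhat'' r1'' t1'' r2'' t2'' = toPrimed Rhat r1'' (t1'' - l1 * r2'' - l2 * t2'') r2'' t2'')
  (t1''0 : R) (ht1''0 : t1''0 = argu + l1 * Cabs v0 + l2 * argv) :
  let Theta1 := (INR p + 1) / 2 * argu in
  let Theta2 := (INR p - 1) / 2 * argu + argmu in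
  let Hdiag := fun i : nat =>
    match i with
    | 2%nat => h11
    | 3%nat => - (4 * (INR p - 1) ^ 2 * Cabs mu ^ 2) / (k1 ^ 2 * h11)
    | _ => 0
    end in
  h11 = 4 * (INR p - 1) * Cabs mu ^ 3 * Cabs u0 * sin Theta1 * cos Theta2 / k1 ^ 2 /\
  (forall i j : nat, (2 <= i <= 4)%nat -> (2 <= j <= 4)%nat ->
     pd2 i j Rhat'' r1'0 t1''0 (Cabs v0) argv
       (if Nat.eqb i j then Hdiag i else 0)).
Proof.
  intros Theta1 Theta2 Hdiag.
  destruct (sing_mod p q mu _ _ _ _ ltac:(lia) ltac:(lia) hmu hsing) as [MU MV].
  assert (R1sq : Cabs u0 ^ 2 = fst u0 ^ 2 + snd u0 ^ 2).
  { unfold Cabs. apply pow2_sqrt. nra. }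
  assert (R2sq : Cabs v0 ^ 2 = fst v0 ^ 2 + snd v0 ^ 2).
  { unfold Cabs. apply pow2_sqrt. nra. }
  rewrite <- R1sq in MU. rewrite <- R2sq in MV.
  set (R1 := Cabs u0) in *. set (R2 := Cabs v0) in *. set (m := Cabs mu) in *.
  set (P := INR p) in *. set (Qn := INR q) in *.
  assert (R1p : 0 <= R1) by apply sqrt_pos.
  assert (R2p : 0 <= R2) by apply sqrt_pos.
  assert (XU : P * R1^(pred p) = 1).
  { assert (0 <= P * R1^(pred p)) by (apply Rmult_le_pos; [apply pos_INR|apply pow_le; auto]).
    assert ((P * R1^(pred p))^2 = 1).
    { rewrite <- MU, Rpow_mult_distr, <- !pow_mult. f_equal. f_equal. lia. }
    nra. }
  assert (XV : Qn * R2^(pred q) = 1).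
  { assert (0 <= Qn * R2^(pred q)) by (apply Rmult_le_pos; [apply pos_INR|apply pow_le; auto]).
    assert ((Qn * R2^(pred q))^2 = 1).
    { rewrite <- MV, Rpow_mult_distr, <- !pow_mult. f_equal. f_equal. lia. }
    nra. }
  assert (PU1 : R1^p = R1 * R1^(pred p)).
  { destruct p; [lia|]. reflexivity. }
  assert (PU2 : R1^(pred p) = R1 * R1^(pred (pred p))).
  { destruct p as [|[|p]]; [lia|lia|]. reflexivity. }
  assert (PV1 : R2^q = R2 * R2^(pred q)).
  { destruct q; [lia|]. reflexivity. }
  assert (PV2 : R2^(pred q) = R2 * R2^(pred (pred q))).
  { destruct q as [|[|q]]; [lia|lia|]. reflexivity. }
  assert (IU : INR (pred p) = P - 1).
  { unfold P. destruct p; [lia|]. simpl pred. rewrite S_INR; ring. }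
  assert (IV : INR (pred q) = Qn - 1).
  { unfold Qn. destruct q; [lia|]. simpl pred. rewrite S_INR; ring. }
  assert (HR1 : R1 <> 0).
  { intro Z. rewrite PU2, Z in XU. lra. }
  assert (HR2 : R2 <> 0).
  { intro Z. rewrite PV2, Z in XV. lra. }
  assert (Hmr : fst mu = m * cos argmu) by (rewrite hargmu at 1; reflexivity).
  assert (Hmi : snd mu = m * sin argmu) by (rewrite hargmu at 1; reflexivity).
  set (Theta3 := (Qn + 1) / 2 * argv).
  set (c1 := cos Theta1). set (s1 := sin Theta1).
  set (c2 := cos Theta2). set (s2 := sin Theta2).
  set (c3 := cos Theta3). set (s3 := sin Theta3).
  set (e := powerRZ (-1) kappa).
  assert (E2 : e * e = 1) by apply powerRZ_m1_sq.
  assert (TU1 : fst mu * cos (P*argu) - snd mu * sin (P*argu) = m*(c1*c2 - s1*s2)).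
  { rewrite Hmr, Hmi. transitivity (m * cos (P*argu + argmu)). { rewrite cos_plus; ring. }
    replace (P*argu + argmu) with (Theta1 + Theta2) by (unfold Theta1, Theta2; fold P; field).
    rewrite cos_plus; reflexivity. }
  assert (TU2 : snd mu * cos (P*argu) + fst mu * sin (P*argu) = m*(s1*c2 + c1*s2)).
  { rewrite Hmr, Hmi. transitivity (m * sin (P*argu + argmu)). { rewrite sin_plus; ring. }
    replace (P*argu + argmu) with (Theta1 + Theta2) by (unfold Theta1, Theta2; fold P; field).
    rewrite sin_plus; reflexivity. }
  assert (TU3 : fst mu * cos argu + snd mu * sin argu = m*(c1*c2 + s1*s2)).
  { rewrite Hmr, Hmi. transitivity (m * cos (argmu - argu)). { rewrite cos_minus; ring. }
    replace (argmu - argu) with (Theta2 - Theta1) by (unfold Theta1, Theta2; fold P; field).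
    rewrite cos_minus; unfold c1, c2, s1, s2; ring. }
  assert (TU4 : snd mu * cos argu - fst mu * sin argu = m*(s2*c1 - c2*s1)).
  { rewrite Hmr, Hmi. transitivity (m * sin (argmu - argu)). { rewrite sin_minus; ring. }
    replace (argmu - argu) with (Theta2 - Theta1) by (unfold Theta1, Theta2; fold P; field).
    rewrite sin_minus; unfold c1, c2, s1, s2; ring. }
  assert (Hk : Theta2 = (Qn - 1)/2*argv + IZR kappa * PI) by (unfold Theta2; fold P Qn in hkappa; lra).
  assert (TV1 : cos (Qn*argv) = e*(c3*c2 - s3*s2)).
  { destruct (shift_Z (Qn*argv) kappa) as [H _]. fold e in H.
    replace (Qn*argv + IZR kappa * PI) with (Theta3 + Theta2) in H by (rewrite Hk; unfold Theta3; field).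
    rewrite cos_plus in H. fold c2 c3 s2 s3 in H. rewrite H, <- Rmult_assoc, E2. ring. }
  assert (TV2 : sin (Qn*argv) = e*(s3*c2 + c3*s2)).
  { destruct (shift_Z (Qn*argv) kappa) as [_ H]. fold e in H.
    replace (Qn*argv + IZR kappa * PI) with (Theta3 + Theta2) in H by (rewrite Hk; unfold Theta3; field).
    rewrite sin_plus in H. fold c2 c3 s2 s3 in H. rewrite H, <- Rmult_assoc, E2. ring. }
  assert (TV3 : cos argv = e*(c3*c2 + s3*s2)).
  { destruct (shift_Z (Theta3 - Theta2) kappa) as [H _]. fold e in H.
    replace (Theta3 - Theta2 + IZR kappa * PI) with argv in H by (rewrite Hk; unfold Theta3; field).
    rewrite cos_minus in H. exact H. }
  assert (TV4 : sin argv = e*(s3*c2 - c3*s2)).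
  { destruct (shift_Z (Theta3 - Theta2) kappa) as [_ H]. fold e in H.
    replace (Theta3 - Theta2 + IZR kappa * PI) with argv in H by (rewrite Hk; unfold Theta3; field).
    rewrite sin_minus in H. exact H. }
  destruct (uclosed1 (fst mu) (snd mu) m c1 s1 c2 s2 p R1 argu TU1 TU2 TU3 TU4 XU PU1) as [CQr [CQt CRr]].
  destruct (uclosed1 1 0 1 c3 s3 (e*c2) (e*s2) q R2 argv) as [CVr [CVt _]];
    [fold Qn; rewrite TV1, TV2; ring | fold Qn; rewrite TV1, TV2; ring | rewrite TV3, TV4; ring | rewrite TV3, TV4; ring | exact XV | exact PV1 |].
  rewrite Ropp_0 in CVr, CVt.
  assert (FQ : forall x1 x2 x3 x4, polar (Qre p q mu) x1 x2 x3 x4 =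
     FF (cuQ mu) cvQ p q 0 1 0 0 0 0 0 1 0 0 x1 x2 x3 x4).
  { intros. rewrite polarQ. unfold FF. f_equal; apply Uf_eq; unfold LA, LB, aff; ring. }
  assert (GQ : forall j, (1 <= j <= 4)%nat -> pd j (polar (Qre p q mu)) R1 argu R2 argv
     (GG (cuQ mu) cvQ p q 0 1 0 0 0 0 0 1 0 0 j R1 argu R2 argv)).
  { intros j Hj. eapply pd_ext; [exact FQ|]. apply FF_pd; auto. }
  assert (K1 : k1 = Ur (cuQ mu) p R1 argu).
  { rewrite (pd_unique _ _ _ _ _ _ _ _ hk1 (GQ 1%nat ltac:(lia))).
    rewrite (GG_eval _ _ _ _ _ _ _ _ _ _ _ _ _ _ _ _ _ _ _ R1 argu) by (unfold LA, LB, aff; ring).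
    simpl dir; ring. }
  assert (K2 : k2 = Ut (cuQ mu) p R1 argu).
  { rewrite (pd_unique _ _ _ _ _ _ _ _ hk2 (GQ 2%nat ltac:(lia))).
    rewrite (GG_eval _ _ _ _ _ _ _ _ _ _ _ _ _ _ _ _ _ _ _ R1 argu) by (unfold LA, LB, aff; ring).
    simpl dir; ring. }
  assert (K3 : k3 = Ur cvQ q R2 argv).
  { rewrite (pd_unique _ _ _ _ _ _ _ _ hk3 (GQ 3%nat ltac:(lia))).
    rewrite (GG_eval _ _ _ _ _ _ _ _ _ _ _ _ _ _ _ _ _ _ _ R1 argu) by (unfold LA, LB, aff; ring).
    simpl dir; ring. }
  assert (K4 : k4 = Ut cvQ q R2 argv).
  { rewrite (pd_unique _ _ _ _ _ _ _ _ hk4 (GQ 4%nat ltac:(lia))).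
    rewrite (GG_eval _ _ _ _ _ _ _ _ _ _ _ _ _ _ _ _ _ _ _ R1 argu) by (unfold LA, LB, aff; ring).
    simpl dir; ring. }
  unfold cuQ, cvQ in K1, K2, K3, K4. rewrite CQr in K1. rewrite CQt in K2.
  rewrite CVr in K3. rewrite CVt in K4.
  assert (Hc1c2 : c1 <> 0 /\ c2 <> 0 /\ m <> 0).
  { repeat split; intro Z; apply hk1nz; rewrite K1, Z; ring. }
  destruct Hc1c2 as [Hc1 [Hc2 Hm]].
  assert (FR : forall x1 x2 x3 x4, toPrimed (polar (Rim p q mu)) x1 x2 x3 x4 =
     FF (cuR mu) cvR p q 0 (1/k1) (-k2/k1) (-k3/k1) (-k4/k1) 0 0 1 0 0 x1 x2 x3 x4).
  { intros. rewrite htoPrimed, polarR. unfold FF. f_equal; apply Uf_eq; unfold LA, LB, aff; field; auto. }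
  assert (LApt : LA 0 (1/k1) (-k2/k1) (-k3/k1) (-k4/k1) r1'0 argu R2 argv = R1).
  { unfold LA, aff. rewrite hr1'0. field; auto. }
  assert (LBpt : LB 0 0 1 0 0 r1'0 argu R2 argv = argu) by (unfold LB, aff; ring).
  assert (SS : s * k1 = Ur (cuR mu) p R1 argu).
  { pose proof (FF_pd (cuR mu) cvR p q 0 (1/k1) (-k2/k1) (-k3/k1) (-k4/k1) 0 0 1 0 0 1 r1'0 argu R2 argv ltac:(lia)) as Hp.
    rewrite (GG_eval _ _ _ _ _ _ _ _ _ _ _ _ _ _ _ _ _ _ _ R1 argu LApt LBpt) in Hp. simpl dir in Hp.
    assert (hs' : pd 1 (FF (cuR mu) cvR p q 0 (1/k1) (-k2/k1) (-k3/k1) (-k4/k1) 0 0 1 0 0) r1'0 argu R2 argv s)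
      by (eapply pd_ext; [intros; symmetry; apply FR | exact hs]).
    rewrite (pd_unique _ _ _ _ _ _ _ _ hs' Hp). field; auto. }
  unfold cuR in SS. rewrite CRr, K1 in SS.
  assert (Hs : s * c2 = s2).
  { apply (Rmult_eq_reg_l (2*m*c1)); [|repeat apply Rmult_integral_contrapositive_currified; auto; lra].
    rewrite <- SS. ring. }
  assert (C2 : c2^2 + s2^2 = 1) by (unfold c2, s2; pose proof (sin2_cos2 Theta2) as HH0; unfold Rsqr in HH0; simpl; lra).
  assert (C1 : c1^2 + s1^2 = 1) by (unfold c1, s1; pose proof (sin2_cos2 Theta1) as HH0; unfold Rsqr in HH0; simpl; lra).
  assert (C3 : c3^2 + s3^2 = 1) by (unfold c3, s3; pose proof (sin2_cos2 Theta3) as HH0; unfold Rsqr in HH0; simpl; lra).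
  destruct (uclosed2 (fst mu) (snd mu) m c1 s1 c2 s2 s p R1 argu TU1 TU2 TU3 TU4 XU PU1 PU2 IU Hs C2)
    as [HUrr [HUrt HUtt]].
  destruct (uclosed2 1 0 1 c3 s3 (e*c2) (e*s2) s q R2 argv) as [HVrr0 [HVrt0 HVtt0]];
    [fold Qn; rewrite TV1, TV2; ring | fold Qn; rewrite TV1, TV2; ring | rewrite TV3, TV4; ring
    | rewrite TV3, TV4; ring | exact XV | exact PV1 | exact PV2 | exact IV
    | rewrite <- Hs; ring
    | replace ((e*c2)^2 + (e*s2)^2) with ((e*e)*(c2^2+s2^2)) by ring; rewrite E2, C2; ring |].
  rewrite Ropp_0 in HVrr0, HVrt0, HVtt0.
  replace (- (1)) with (-1) in HVrr0, HVrt0, HVtt0 by ring.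
  set (cuH := clin (cuR mu) (cuQ mu) s).
  set (cvH := clin cvR cvQ s).
  change (clin (mkc 0 1 0 (-1)) (mkc 1 0 1 0) s) with cvH in HVrr0, HVrt0, HVtt0.
  change (clin (mkc (snd mu) (fst mu) (snd mu) (- fst mu)) (mkc (fst mu) (- snd mu) (fst mu) (snd mu)) s) with cuH in HUrr, HUrt, HUtt.
  set (Urr0 := Urr cuH p R1 argu) in *. set (Urt0 := Urt cuH p R1 argu) in *. set (Utt0 := Utt cuH p R1 argu) in *.
  set (Vrr0 := Urr cvH q R2 argv) in *. set (Vrt0 := Urt cvH q R2 argv) in *. set (Vtt0 := Utt cvH q R2 argv) in *.
  assert (HVrr : R2*c2*Vrr0 = e*(Qn-1)*s3).
  { replace (R2*c2*Vrr0) with ((e*e)*(R2*c2*Vrr0)) by (rewrite E2; ring).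
    replace ((e*e)*(R2*c2*Vrr0)) with (e*(R2*(e*c2)*Vrr0)) by ring. fold Qn in HVrr0. rewrite HVrr0. ring. }
  assert (HVrt : c2*Vrt0 = e*(Qn-1)*c3).
  { replace (c2*Vrt0) with ((e*e)*(c2*Vrt0)) by (rewrite E2; ring).
    replace ((e*e)*(c2*Vrt0)) with (e*((e*c2)*Vrt0)) by ring. fold Qn in HVrt0. rewrite HVrt0. ring. }
  assert (HVtt : c2*Vtt0 = -e*R2*(Qn-1)*s3).
  { replace (c2*Vtt0) with ((e*e)*(c2*Vtt0)) by (rewrite E2; ring).
    replace ((e*e)*(c2*Vtt0)) with (e*((e*c2)*Vtt0)) by ring. fold Qn in HVtt0. rewrite HVtt0. ring. }
  assert (FH : forall x1 x2 x3 x4, toPrimed Rhat x1 x2 x3 x4 =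
     FF cuH cvH p q 0 (1/k1) (-k2/k1) (-k3/k1) (-k4/k1) 0 0 1 0 0 x1 x2 x3 x4).
  { intros. rewrite htoPrimed, hRhat, polarR, polarQ. unfold FF.
    replace (LA 0 (1/k1) (-k2/k1) (-k3/k1) (-k4/k1) x1 x2 x3 x4) with ((x1 - k2*x2 - k3*x3 - k4*x4)/k1)
      by (unfold LA, aff; field; auto).
    replace (LB 0 0 1 0 0 x1 x2 x3 x4) with x2 by (unfold LB, aff; ring).
    unfold cuH, cvH. rewrite <- !Uf_lin. ring. }
  assert (HHp : forall i j, (1<=i<=4)%nat -> (1<=j<=4)%nat -> pd2 i j (toPrimed Rhat) r1'0 argu R2 argv
     (HH cuH cvH p q 0 (1/k1) (-k2/k1) (-k3/k1) (-k4/k1) 0 0 1 0 0 i j r1'0 argu R2 argv)).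
  { intros. eapply pd2_ext; [exact FH|]. apply FF_pd2; auto. }
  assert (H11 : h11 = (-k2/k1)*((-k2/k1)*Urr0 + Urt0) + ((-k2/k1)*Urt0 + Utt0)).
  { rewrite (pd2_unique _ _ _ _ _ _ _ _ _ hh11 (HHp 2%nat 2%nat ltac:(lia) ltac:(lia))).
    rewrite (HH_eval _ _ _ _ _ _ _ _ _ _ _ _ _ _ _ _ _ _ _ _ R1 argu LApt LBpt). simpl dir. unfold Urr0, Urt0, Utt0; field; auto. }
  assert (H12 : h12 = (-k3/k1)*((-k2/k1)*Urr0 + Urt0)).
  { rewrite (pd2_unique _ _ _ _ _ _ _ _ _ hh12 (HHp 2%nat 3%nat ltac:(lia) ltac:(lia))).
    rewrite (HH_eval _ _ _ _ _ _ _ _ _ _ _ _ _ _ _ _ _ _ _ _ R1 argu LApt LBpt). simpl dir. unfold Urr0, Urt0, Utt0; field; auto. }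
  assert (H13 : h13 = (-k4/k1)*((-k2/k1)*Urr0 + Urt0)).
  { rewrite (pd2_unique _ _ _ _ _ _ _ _ _ hh13 (HHp 2%nat 4%nat ltac:(lia) ltac:(lia))).
    rewrite (HH_eval _ _ _ _ _ _ _ _ _ _ _ _ _ _ _ _ _ _ _ _ R1 argu LApt LBpt). simpl dir. unfold Urr0, Urt0, Utt0; field; auto. }
  assert (K3' : k3 = 2*e*c3*c2) by (rewrite K3; ring).
  assert (K4' : k4 = -2*e*R2*s3*c2) by (rewrite K4; ring).
  destruct (final_alg m R1 R2 P Qn c1 s1 c2 s2 c3 s3 e k1 k2 k3 k4 Urr0 Urt0 Utt0 Vrr0 Vrt0 Vtt0 h11 h12 h13 l1 l2
     K1 K2 K3' K4' HUrr HUrt HUtt HVrr HVrt HVtt C1 C3 E2 hphi hk1nz HR1 HR2 hh11nz H11 H12 H13 hl1 hl2) as [F1 F2].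
  split; [exact F1|].
  assert (FD : forall x1 x2 x3 x4, Rhat'' x1 x2 x3 x4 =
     FF cuH cvH p q 0 (1/k1) (-k2/k1) ((k2*l1-k3)/k1) ((k2*l2-k4)/k1) 0 0 1 (-l1) (-l2) x1 x2 x3 x4).
  { intros. rewrite hRhat'', htoPrimed, hRhat, polarR, polarQ. unfold FF.
    replace (LA 0 (1/k1) (-k2/k1) ((k2*l1-k3)/k1) ((k2*l2-k4)/k1) x1 x2 x3 x4)
      with ((x1 - k2*(x2 - l1*x3 - l2*x4) - k3*x3 - k4*x4)/k1) by (unfold LA, aff; field; auto).
    replace (LB 0 0 1 (-l1) (-l2) x1 x2 x3 x4) with (x2 - l1*x3 - l2*x4) by (unfold LB, aff; ring).
    unfold cuH, cvH. rewrite <- !Uf_lin. ring. }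
  assert (LApt2 : LA 0 (1/k1) (-k2/k1) ((k2*l1-k3)/k1) ((k2*l2-k4)/k1) r1'0 t1''0 R2 argv = R1).
  { unfold LA, aff. rewrite ht1''0, hr1'0. field; auto. }
  assert (LBpt2 : LB 0 0 1 (-l1) (-l2) r1'0 t1''0 R2 argv = argu).
  { unfold LB, aff. rewrite ht1''0. ring. }
  intros i j Hi Hj.
  eapply pd2_ext; [exact FD|]. eapply pd2_conv; [apply FF_pd2; lia|].
  rewrite (HH_eval _ _ _ _ _ _ _ _ _ _ _ _ _ _ _ _ _ _ _ _ R1 argu LApt2 LBpt2).
  unfold Hdiag. apply F2; auto.
Qed.
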